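(* Let $q$ be a prime power, $s,\ell$ positive integers with $q\equiv 1\pmod{\ell}$, and let $\alpha\in\{1,-1\}\subseteq\mathbb{F}_q$. Assume $\gcd(s,q)=1$, and that $s$ is odd if $\alpha=-1$. Then no two-dimensional $(\alpha,1)$-constacyclic code of length $s.\ell$ over $\mathbb{F}_q$, i.e. no ideal $\mathcal{C}$ of $\mathbb{F}_q[x,y]/\langle x^s-\alpha,\,y^\ell-1\rangle$, is self-dual.
   Context: Elements of $\mathbb{F}_q[x,y]/\langle x^s-\alpha,y^\ell-1\rangle$ are identified with vectors $(c_{i,j})$ of length $s\ell$ via the coefficients of $x^iy^j$ ($0\le i\le s-1$, $0\le j\le\ell-1$). Self-dual means $\mathcal{C}=\mathcal{C}^\perp$ with respect to the Euclidean inner product $\sum_{i,j}c_{i,j}d_{i,j}$. *)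

(* Defs.v *)
From HB Require Import structures.
From mathcomp Require Import all_boot all_order all_algebra all_field.
Set Implicit Arguments. Unset Strict Implicit. Unset Printing Implicit Defensive.
Import GRing.Theory.
Local Open Scope ring_scope.

(* Elements of F[x,y]/<x^s - alpha, y^l - 1> are represented by their
   coefficient arrays c : 'M[F]_(s,l), c i j = coefficient of x^i y^j. *)

(* Multiplication in F[x,y]/<x^s - alpha, y^l - 1>:
   x^i1 y^j1 * x^i2 y^j2 = alpha^((i1+i2)/s) x^((i1+i2) mod s) y^((j1+j2) mod l). *)
Definition cmul (F : fieldType) (s l : nat) (alpha : F)
    (c d : 'M[F]_(s, l)) : 'M[F]_(s, l) :=
  \matrix_(i < s, j < l)
    \sum_(i1 < s) \sum_(j1 < l) \sum_(i2 < s) \sum_(j2 < l)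
      (if ((i1 + i2) %% s == i)%N && ((j1 + j2) %% l == j)%N
       then alpha ^+ ((i1 + i2) %/ s) * c i1 j1 * d i2 j2 else 0).

Definition is_ideal (F : fieldType) (s l : nat) (alpha : F)
    (C : 'M[F]_(s, l) -> Prop) : Prop :=
  [/\ C 0,
      (forall c d, C c -> C d -> C (c + d)),
      (forall c, C c -> C (- c)) &
      (forall r c, C c -> C (cmul alpha r c))].

Definition edot (F : fieldType) (s l : nat) (c d : 'M[F]_(s, l)) : F :=
  \sum_(i < s) \sum_(j < l) c i j * d i j.

Definition dual (F : fieldType) (s l : nat) (C : 'M[F]_(s, l) -> Prop)
    : 'M[F]_(s, l) -> Prop :=
  fun d => forall c, C c -> edot c d = 0.

Definition self_dual (F : fieldType) (s l : nat) (C : 'M[F]_(s, l) -> Prop)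
    : Prop :=
  forall d, C d <-> dual C d.

(* Main.v *)
Require Import Defs.
From HB Require Import structures.
From mathcomp Require Import all_boot all_order all_algebra all_field.
From mathcomp Require Import ring.
Import GRing.Theory.
Local Open Scope ring_scope.

Lemma single_sum (F : fieldType) (n : nat) (n0 : (0 < n)%N) (a i : 'I_n) (K : F) :
  \sum_(b < n) (if ((b + a) %% n == i)%N then K else 0) = K.
Proof.
pose h := fun b : 'I_n => Ordinal (ltn_pmod (b + a) n0).
have hinj : injective h.
  move=> x y /(congr1 val) /= /eqP; rewrite eqn_modDr !modn_small // => /eqP.
  by move/val_inj.
rewrite -big_mkcond /= (big_pred1 (invF hinj i)) //.
move=> b /=; apply/idP/idP.
  move=> H; apply/eqP; apply: (hinj); rewrite f_invF; apply/val_inj => /=.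
  exact/eqP.
by move/eqP->; have := f_invF hinj i => /(congr1 val) /= ->.
Qed.

Lemma theorem5_pchar (F : finFieldType) (s l : nat) :
  (0 < l)%N -> (l %| #|F| - 1)%N -> coprime s #|F| -> ((s * l)%:R : F) != 0.
Proof.
move=> l0 hl hs.
have [p pp pc] := finPcharP F.
have cF := @card_pprimeChar p F pc.
have pF : (p %| #|F|)%N.
  rewrite cF dvdn_exp //.
  case E: (logn _ _) => [|//]; move: cF; rewrite E expn0 => h.
  by have := finNzRing_gt1 F; rewrite h.
rewrite -(dvdn_pcharf pc) Euclid_dvdM //; apply/negP => /orP [ps|pl].
  have : (p %| gcdn s #|F|)%N by rewrite dvdn_gcd ps pF.
  by rewrite (eqP hs) dvdn1 => /eqP p1; move: pp; rewrite p1.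
have : (p %| #|F| - 1)%N by apply: dvdn_trans hl.
rewrite dvdn_subr ?dvdn1 ?(ltnW (finNzRing_gt1 F)) //.
by move=> /eqP p1; move: pp; rewrite p1.
Qed.

Theorem theorem5 (F : finFieldType) (s l : nat) (alpha : F) :
  (0 < s)%N -> (0 < l)%N ->
  (l %| #|F| - 1)%N ->
  (alpha = 1 \/ alpha = -1) ->
  coprime s #|F| ->
  (alpha = -1 -> odd s) ->
  forall C : 'M[F]_(s, l) -> Prop,
    is_ideal alpha C -> ~ self_dual C.
Proof.
move=> s0 l0 hl ha hs hodd C [C0 CD CN CM] SD.
pose u : 'M[F]_(s, l) := \matrix_(i < s, j < l) alpha ^+ i.
have a2 : alpha ^+ 2 = 1 by case: ha => ->; rewrite ?expr1n ?sqrrN ?expr1n.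
have key : forall (i1 i2 i : nat), ((i1 + i2) %% s = i)%N ->
    alpha ^+ ((i1 + i2) %/ s) * alpha ^+ i1 = alpha ^+ i * alpha ^+ i2.
  move=> i1 i2 i hi; case: ha hodd => -> hodd; first by rewrite !expr1n mulr1.
  rewrite -!exprD -[LHS]signr_odd -[RHS]signr_odd; congr (_ ^+ _).
  have := divn_eq (i1 + i2) s; rewrite hi => /(congr1 odd).
  rewrite !oddD oddM (hodd erefl) andbT.
  by case: (odd i1); case: (odd i2); case: (odd i); case: (odd _).
have uu : edot u u != 0.
  rewrite /edot.
  have -> : \sum_(i < s) \sum_(j < l) u i j * u i j = \sum_(i < s) \sum_(j < l) (1 : F).
    apply: eq_bigr => i _; apply: eq_bigr => j _.
    by rewrite !mxE -exprD addnn -mul2n exprM a2 expr1n.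
  under eq_bigr do rewrite sumr_const card_ord.
  rewrite sumr_const card_ord -mulrnA mulnC.
  by apply: theorem5_pchar.
have mulu : forall (k : F) c, cmul alpha (k *: u) c = (k * edot c u) *: u.
  move=> k c; apply/matrixP => i j; rewrite !mxE.
  transitivity (\sum_(i1 < s) \sum_(j1 < l) \sum_(i2 < s) \sum_(j2 < l)
    (if ((i1 + i2) %% s == i)%N then (if ((j1 + j2) %% l == j)%N
       then k * alpha ^+ i * (c i2 j2 * alpha ^+ i2) else 0) else 0)).
    apply: eq_bigr => i1 _; apply: eq_bigr => j1 _; apply: eq_bigr => i2 _.
    apply: eq_bigr => j2 _.
    case: eqP => h1; case: eqP => h2 //=.
    rewrite !mxE (mulrC k) mulrA (key _ _ _ h1); ring.
  under eq_bigr => i1 _ do rewrite exchange_big.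
  rewrite exchange_big.
  under eq_bigr => i2 _ do under eq_bigr => i1 _ do rewrite exchange_big.
  under eq_bigr => i2 _ do rewrite exchange_big.
  have E : forall (i2 : 'I_s) (j2 : 'I_l) (K : F),
    \sum_(i1 < s) \sum_(j1 < l) (if ((i1 + i2) %% s == i)%N then (if ((j1 + j2) %% l == j)%N
       then K else 0) else 0) = K.
    move=> i2 j2 K.
    transitivity (\sum_(i1 < s) (if ((i1 + i2) %% s == i)%N then K else 0)).
      apply: eq_bigr => i1 _; case: ifP => _; first exact: single_sum.
      exact: big1.
    exact: single_sum.
  under eq_bigr => i2 _ do under eq_bigr => j2 _ do rewrite E.
  rewrite mulrAC /edot mulr_sumr; apply: eq_bigr => i2 _.
  rewrite mulr_sumr; apply: eq_bigr => j2 _; rewrite mxE //.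
have nCu : ~ C u.
  by move=> Cu; move/negP: uu; apply; apply/eqP; apply: (proj1 (SD u) Cu).
apply: (nCu); apply/SD => c Cc.
apply/eqP; apply/negPn/negP => nz.
apply: nCu.
have := CM ((edot c u)^-1 *: u) c Cc.
by rewrite mulu mulVf // scale1r.
Qed.
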